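(* Let $\Omega\subset\mathbb{R}^{2n}$ be a centrally symmetric convex body with $c^{\mathrm{lin}}_{\min}(\Omega)\ge\pi$, and let $(\ell,\ell')$ be a pair of transverse Lagrangian planes, with $\Pi_\ell$ the projection onto $\ell$ along $\ell'$ and $\Pi_{\ell'}$ the projection onto $\ell'$ along $\ell$. Then $(\Pi_\ell\Omega)^o_{\ell'}\subset\Pi_{\ell'}\Omega$, i.e. $(\Pi_\ell\Omega,\Pi_{\ell'}\Omega)$ is a Lagrangian polar dual pair.
   Context: Write $z=(x,p)\in\mathbb{R}^{2n}$, $\omega((x,p),(x',p'))=p\cdot x'-p'\cdot x$. $\mathrm{Sp}(n)$ is the group of linear automorphisms preserving $\omega$. $c^{\mathrm{lin}}_{\min}(\Omega)=\sup\{\pi R^2: S(B^{2n}(z_0,R))\subset\Omega,\ S\in\mathrm{Sp}(n),\ z_0\in\mathbb{R}^{2n}\}$ where $B^{2n}(z_0,R)$ is the closed Euclidean ball of radius $R$ centered at $z_0$. A Lagrangian plane is an $n$-dimensional subspace on which $\omega$ vanishes; $\ell,\ell'$ are transverse if $\ell\cap\ell'=0$. For a centrally symmetric convex body $X_\ell\subset\ell$, its Lagrangian polar dual in $\ell'$ is $X^o_{\ell'}=\{z'\in\ell':\omega(z,z')\le1\ \forall z\in X_\ell\}$; $(X_\ell,Y_{\ell'})$ is a Lagrangian polar dual pair if $X^o_{\ell'}\subset Y_{\ell'}$. *)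

(* Defs.v *)
(* Points z = (x,p) of R^{2n} are row vectors 'rV[R]_(n + n):
   x = lsubmx z (first n coordinates), p = rsubmx z (last n coordinates). *)
From HB Require Import structures.
From mathcomp Require Import all_boot all_order all_algebra.
From mathcomp Require Import all_classical all_reals all_analysis.
Import numFieldNormedType.Exports.
Set Implicit Arguments. Unset Strict Implicit. Unset Printing Implicit Defensive.
Import Order.TTheory GRing.Theory Num.Theory.
Local Open Scope ring_scope.
Local Open Scope classical_set_scope.

Section Defs.
Variables (R : realType) (n : nat).

Notation pt := 'rV[R]_(n + n).

Definition dotv (a b : 'rV[R]_n) : R := (a *m b^T) 0 0.

Definition omega (z z' : pt) : R :=
  dotv (rsubmx z) (lsubmx z') - dotv (rsubmx z') (lsubmx z).

Definition sqnorm (z : pt) : R := (z *m z^T) 0 0.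

Definition cball2n (z0 : pt) (r : R) : set pt :=
  [set z | sqnorm (z - z0) <= r ^+ 2].

Definition symplectic (S : 'M[R]_(n + n)) : Prop :=
  S \in unitmx /\ forall u v : pt, omega (u *m S) (v *m S) = omega u v.

Definition clin_min (Omega : set pt) : R :=
  sup [set pi * r ^+ 2 | r in [set r : R | 0 < r /\
         exists (S : 'M[R]_(n + n)) (z0 : pt),
           symplectic S /\ (fun z => z *m S) @` cball2n z0 r `<=` Omega]].

Definition convex_set (Omega : set pt) : Prop :=
  forall a b : pt, Omega a -> Omega b -> forall t : R, 0 <= t <= 1 ->
    Omega (t *: a + (1 - t) *: b).

Definition centrally_symmetric_convex_body (Omega : set pt) : Prop :=
  compact Omega /\ convex_set Omega /\
  (exists (z0 : pt) (r : R), 0 < r /\ cball2n z0 r `<=` Omega) /\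
  (forall z : pt, Omega z -> Omega (- z)).

Definition lagrangian (L : 'M[R]_(n + n)) : Prop :=
  \rank L = n /\
  forall u v : pt, (u <= L)%MS -> (v <= L)%MS -> omega u v = 0.

Definition transverse (L L' : 'M[R]_(n + n)) : Prop :=
  \rank (L :&: L')%MS = 0%N.

Definition proj_along (L L' : 'M[R]_(n + n)) (z : pt) : pt :=
  z *m proj_mx L L'.

Definition lag_polar (X : set pt) (L' : 'M[R]_(n + n)) : set pt :=
  [set z' | (z' <= L')%MS /\ forall z, X z -> omega z z' <= 1].

Definition lag_polar_dual_pair (X Y : set pt) (L' : 'M[R]_(n + n)) : Prop :=
  lag_polar X L' `<=` Y.

End Defs.

(* Main.v *)
Require Import Defs.
From HB Require Import structures.
From mathcomp Require Import all_boot all_order all_algebra.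
From mathcomp Require Import all_classical all_reals all_analysis.
From mathcomp Require Import ring lra.
Import numFieldNormedType.Exports.
Import Order.TTheory GRing.Theory Num.Theory.
Local Open Scope ring_scope.
Local Open Scope classical_set_scope.

Section Aux.
Variables (R : realType) (n : nat).
Notation pt := 'rV[R]_(n + n).

Lemma dotvDl (a b c : 'rV[R]_n) : dotv (a + b) c = dotv a c + dotv b c.
Proof. by rewrite /dotv mulmxDl mxE. Qed.
Lemma dotvDr (a b c : 'rV[R]_n) : dotv c (a + b) = dotv c a + dotv c b.
Proof. by rewrite /dotv linearD /= mulmxDr mxE. Qed.
Lemma dotvZl k (a c : 'rV[R]_n) : dotv (k *: a) c = k * dotv a c.
Proof. by rewrite /dotv -scalemxAl mxE. Qed.
Lemma dotvZr k (a c : 'rV[R]_n) : dotv c (k *: a) = k * dotv c a.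
Proof. by rewrite /dotv linearZ /= -scalemxAr mxE. Qed.
Lemma dotvNl (a c : 'rV[R]_n) : dotv (- a) c = - dotv a c.
Proof. by rewrite -scaleN1r dotvZl mulN1r. Qed.

Lemma omegaDl (a b c : pt) : omega (a + b) c = omega a c + omega b c.
Proof.
rewrite /omega !linearD /= dotvDl dotvDr; lra.
Qed.
Lemma omegaZl k (a c : pt) : omega (k *: a) c = k * omega a c.
Proof.
rewrite /omega !linearZ /= dotvZl dotvZr; lra.
Qed.

Lemma sqnormE (v : pt) :
  sqnorm v = dotv (lsubmx v) (lsubmx v) + dotv (rsubmx v) (rsubmx v).
Proof.
by rewrite /sqnorm -{1 2}(hsubmxK v) tr_row_mx mul_row_col mxE.
Qed.

Lemma dotv_ge0 (a : 'rV[R]_n) : 0 <= dotv a a.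
Proof.
rewrite /dotv mxE; apply: sumr_ge0 => i _; rewrite mxE -expr2; exact: sqr_ge0.
Qed.

Lemma sqnorm_ge0 (v : pt) : 0 <= sqnorm v.
Proof. by rewrite sqnormE addr_ge0 ?dotv_ge0. Qed.

Lemma sqnormZ k (v : pt) : sqnorm (k *: v) = k ^+ 2 * sqnorm v.
Proof. by rewrite !sqnormE !linearZ /= !dotvZl !dotvZr; lra. Qed.

Definition Jv (v : pt) : pt := row_mx (- rsubmx v) (lsubmx v).

Lemma omegaJ (v : pt) : omega (Jv v) v = sqnorm v.
Proof.
rewrite /omega /Jv row_mxKl row_mxKr sqnormE.
have -> : dotv (rsubmx v) (- rsubmx v) = - dotv (rsubmx v) (rsubmx v).
  by rewrite -scaleN1r dotvZr mulN1r.
lra.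
Qed.

Lemma sqnormJ (v : pt) : sqnorm (Jv v) = sqnorm v.
Proof.
rewrite !sqnormE /Jv row_mxKl row_mxKr.
have -> : dotv (- rsubmx v) (- rsubmx v) = dotv (rsubmx v) (rsubmx v).
  by rewrite -scaleN1r dotvZr dotvZl; lra.
lra.
Qed.

End Aux.
Arguments Jv {R n}.

Lemma ball_in {R : realType} {n : nat} {Omega : set 'rV[R]_(n + n)} {S z0} {rho : R} :
  Defs.convex_set Omega -> (forall z, Omega z -> Omega (- z)) ->
  (fun z => z *m S) @` cball2n z0 rho `<=` Omega ->
  forall x : 'rV[R]_(n + n), sqnorm x <= rho ^+ 2 -> Omega (x *m S).
Proof.
move=> cvx sym sub x hx.
have h1 : Omega ((z0 + x) *m S).
  by apply: sub; exists (z0 + x) => //; rewrite /cball2n /= addrAC subrr add0r.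
have h2 : Omega (- ((z0 - x) *m S)).
  apply: sym; apply: sub; exists (z0 - x) => //.
  rewrite /cball2n /= addrAC subrr add0r -scaleN1r sqnormZ; lra.
have h := cvx _ _ h1 h2 (2^-1) ltac:(apply/andP; split; lra).
have -> : x *m S = 2^-1 *: ((z0 + x) *m S) + (1 - 2^-1) *: (- ((z0 - x) *m S)).
  have -> : 1 - 2^-1 = 2^-1 :> R by lra.
  rewrite -scalerDr mulmxDl mulmxBl opprB.
  rewrite [z0 *m S + _]addrC addrACA subrr addr0 -mulr2n.
  by rewrite -scalerMnr scalerMnl -mulr_natr mulVf ?scale1r // pnatr_eq0.
exact: h.
Qed.
Lemma closed_limit {R : realType} {n : nat} {Omega : set 'rV[R]_(n + n)} {z'} :
  closed Omega -> (forall s : R, 0 < s < 1 -> Omega (s *: z')) -> Omega z'.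
Proof.
move=> cl H.
apply: (@closed_cvg _ _ (at_left (1:R)) _ (fun s : R => s *: z') _ cl).
- near=> s; apply: H; apply/andP; split; near: s;
    [exact: nbhs_left_gt | exact: nbhs_left_lt].
- rewrite -[X in _ --> X]scale1r; apply: cvgZ.
  + apply: cvg_at_left_filter; exact: cvg_id.
  + exact: cvg_cst.
Unshelve. all: end_near.
Qed.

Lemma closedO {R : realType} {n : nat} {Omega : set 'rV[R]_(n + n)} :
  compact Omega -> closed Omega.
Proof. move=> c; apply: compact_closed => //; exact: norm_hausdorff. Qed.

Lemma core_lemma (R : realType) (n : nat) (Omega : set 'rV[R]_(n + n)) :
  centrally_symmetric_convex_body Omega -> pi <= clin_min Omega ->
  forall z', (forall w, Omega w -> omega w z' <= 1) -> Omega z'.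
Proof.
move=> [cpt [cvx [_ sym]]] hpi z' hz'.
apply: (closed_limit (closedO cpt)) => s /andP[s0 s1].
move: hpi; rewrite /clin_min.
set E := [set _ | _ in _] => hpi.
have [E0|E0] := eqVneq E set0.
  by move: hpi; rewrite E0 sup0 => h; have := pi_gt0 R; lra.
have pis : pi * s < sup E.
  apply: (lt_le_trans _ hpi); have := pi_gt0 R; nra.
have [_ [r [r0 [S [z0 [[Su Sw] sub]]]]] <-] := sup_gt (proj1 (set0P E) E0) pis.
rewrite ltr_pM2l ?pi_gt0 // => sr.
have ball := ball_in cvx sym sub.
set v := z' *m invmx S.
have hv : v *m S = z' by rewrite /v mulmxKV.
have ha : r ^+ 2 * sqnorm v <= 1.
  have [a0|a0] := eqVneq (sqnorm v) 0; first by rewrite a0 mulr0 ler01.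
  have apos : 0 < sqnorm v by rewrite lt_neqAle eq_sym a0 sqnorm_ge0.
  set q := Num.sqrt (sqnorm v).
  have q0 : 0 < q by rewrite sqrtr_gt0.
  have qa : q ^+ 2 = sqnorm v by rewrite sqr_sqrtr // ltW.
  have : Omega (((r / q) *: Jv v) *m S).
    apply: ball; rewrite sqnormZ sqnormJ -qa expr_div_n mulrAC -mulrA mulfV ?mulr1 //.
    by rewrite expf_neq0 // gt_eqF.
  move/hz'; rewrite -{1}hv Sw omegaZl omegaJ -qa.
  have -> : r / q * q ^+ 2 = r * q by rewrite expr2 mulrA divfK // gt_eqF.
  move=> h; have : 0 <= r * q by rewrite mulr_ge0 // ltW.
  move=> h0; rewrite !expr2; nra.
have Ok : Omega (r ^+ 2 *: z').
  rewrite -hv scalemxAl; apply: ball; rewrite sqnormZ.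
  have : 0 <= r ^+ 2 by rewrite sqr_ge0.
  rewrite !expr2 in ha *; nra.
have O0 : Omega 0.
  have := ball 0; rewrite mul0mx; apply.
  have -> : sqnorm (0 : 'rV[R]_(n + n)) = 0.
    by rewrite -(scale0r (0 : 'rV[R]_(n + n))) sqnormZ expr0n mul0r.
  exact: sqr_ge0.
have r20 : 0 < r ^+ 2 by rewrite exprn_gt0.
have -> : s *: z' = (s / r ^+ 2) *: (r ^+ 2 *: z') + (1 - s / r ^+ 2) *: 0.
  by rewrite scaler0 addr0 scalerA divfK // gt_eqF.
apply: cvx => //; apply/andP; split.
  by rewrite divr_ge0 // ltW.
by rewrite ler_pdivrMr // mul1r ltW.
Qed.

Theorem mainTheorem10 (R : realType) (n : nat)
    (Omega : set 'rV[R]_(n + n)) (L L' : 'M[R]_(n + n)) :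
  centrally_symmetric_convex_body Omega ->
  pi <= clin_min Omega ->
  lagrangian L -> lagrangian L' -> transverse L L' ->
  lag_polar_dual_pair (proj_along L L' @` Omega) (proj_along L' L @` Omega) L'.
Proof.
move=> hO hpi [rL _] [rL' lagL'] tr z' [z'L' hz'].
have cap0 : (L :&: L' = 0)%MS by apply/eqP; rewrite -mxrank_eq0; apply/eqP.
have cap0' : (L' :&: L = 0)%MS by rewrite capmxC.
have full : forall w : 'rV[R]_(n + n), (w <= L + L')%MS.
  move=> w; apply: submx_full; rewrite /row_full.
  have := mxrank_sum_cap L L'; rewrite rL rL'.
  have -> : \rank (L :&: L')%MS = 0%N by exact: tr.
  by rewrite addn0 => ->.
exists z'; last by rewrite /proj_along proj_mx_id.
apply: (@core_lemma _ _ _ hO hpi) => w Ow.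
have : omega (proj_along L L' w) z' <= 1 by apply: hz'; exists w.
rewrite /proj_along => H; rewrite -[w in omega w _](add_proj_mx cap0 (full w)) omegaDl.
by rewrite (lagL' (w *m proj_mx L' L) z') ?proj_mx_sub // addr0.
Qed.
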